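(* A matrix $M\in\mathbb{R}_+^{p\times q}$ with $\operatorname{rank}(M)\ge 2$ is a slack matrix of some polytope if and only if $\{x^TM: x\in\mathbb{R}_+^p\}=\{x^TM: x\in\mathbb{R}^p\}\cap\mathbb{R}_+^q$ (equivalently, $\{Mz: z\in\mathbb{R}_+^q\}=\{Mz: z\in\mathbb{R}^q\}\cap\mathbb{R}_+^p$) and the all-ones vector $\mathbb{1}\in\mathbb{R}^p$ lies in the column span of $M$.
   Context: For a polytope $P\subseteq\mathbb{R}^n$ with $\dim(P)\ge 1$, a slack matrix of $P$ is any matrix $S=[\mathbb{1},V]\cdot[w,-W]^T\in\mathbb{R}^{p\times q}$ (so $S_{ij}=w_j-W_jv_i$, with $v_i$ the $i$th row of $V$ and $W_j$ the $j$th row of $W$), where $V\in\mathbb{R}^{p\times n}$ satisfies $P=\operatorname{conv}(\text{rows of }V)$ and $W\in\mathbb{R}^{q\times n}$, $w\in\mathbb{R}^q$ satisfy $P=\{x\in\mathbb{R}^n: Wx\le w\}$. A matrix is a slack matrix of some polytope if it is a slack matrix of some polytope of dimension at least one. *)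

(* Defs.v *)
From HB Require Import structures.
From mathcomp Require Import all_boot all_order all_algebra.
From mathcomp Require Import reals.
Set Implicit Arguments. Unset Strict Implicit. Unset Printing Implicit Defensive.
Import Order.TTheory GRing.Theory Num.Theory.
Local Open Scope ring_scope.

Definition in_conv (R : realType) (p n : nat) (V : 'M[R]_(p, n)) (x : 'rV[R]_n) : Prop :=
  exists lam : 'rV[R]_p,
    (forall i, 0 <= lam 0 i) /\ \sum_(i < p) lam 0 i = 1 /\ x = lam *m V.

Definition in_halfspaces (R : realType) (q n : nat) (W : 'M[R]_(q, n)) (w : 'cV[R]_q)
  (x : 'rV[R]_n) : Prop :=
  forall j, (W *m x^T) j 0 <= w j 0.

Definition is_slack_matrix (R : realType) (p q : nat) (M : 'M[R]_(p, q)) : Prop :=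
  exists (n : nat) (V : 'M[R]_(p, n)) (W : 'M[R]_(q, n)) (w : 'cV[R]_q),
    (forall x : 'rV[R]_n, in_conv V x <-> in_halfspaces W w x) /\
    (* dim(P) >= 1 : P contains two distinct points *)
    (exists x y : 'rV[R]_n, [/\ in_conv V x, in_conv V y & x != y]) /\
    M = row_mx (const_mx 1 : 'M[R]_(p, 1)) V *m (row_mx w (- W))^T.

(* Main.v *)
Require Import Defs.
From HB Require Import structures.
From mathcomp Require Import all_boot all_order all_algebra.
From mathcomp Require Import reals ring lra.
Import Order.TTheory GRing.Theory Num.Theory.
Set Implicit Arguments. Unset Strict Implicit. Unset Printing Implicit Defensive.
Local Open Scope ring_scope.

Section Farkas.
Variable R : realFieldType.

Definition farkas_prop {m n} (A : 'M[R]_(m,n)) (b : 'cV[R]_m) :=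
 (exists x : 'cV_n, (forall j, 0 <= x j 0) /\ A *m x = b) \/
 (exists y : 'rV_m, (forall j, 0 <= (y *m A) 0 j) /\ (y *m b) 0 0 < 0).

Lemma prod_ge0 m (u : 'rV[R]_m) (x : 'cV[R]_m) :
  (forall j, 0 <= u 0 j) -> (forall j, 0 <= x j 0) -> 0 <= (u *m x) 0 0.
Proof. by move=> hu hx; rewrite mxE; apply: sumr_ge0 => i _; apply: mulr_ge0. Qed.

Lemma mx11_mulr m (a : 'M[R]_(m,1)) (c : 'M[R]_1) : a *m c = c 0 0 *: a.
Proof. by rewrite {1}[c]mx11_scalar mul_mx_scalar. Qed.

Lemma mx11_mull n (c : 'M[R]_1) (a : 'M[R]_(1,n)) : c *m a = c 0 0 *: a.
Proof. by rewrite {1}[c]mx11_scalar mul_scalar_mx. Qed.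

Lemma farkas0 m (A : 'M[R]_(m,0)) b : farkas_prop A b.
Proof.
case: (eqVneq b 0) => [->|hb].
  by left; exists 0; split => [j|]; rewrite ?mxE ?mulmx0.
right; exists (- b^T); split => [[j hj]//|].
rewrite mxE.
have H : forall i, 0 <= b i 0 * b i 0 by move=> i; rewrite -expr2 sqr_ge0.
have -> : \sum_j (- b^T) 0 j * b j 0 = - \sum_j b j 0 * b j 0.
  by rewrite -sumrN; apply: eq_bigr => i _; rewrite !mxE mulNr.
rewrite oppr_lt0 lt_def sumr_ge0 ?andbT; last by move=> i _; exact: H.
apply/eqP => /(psumr_eq0P (fun i _ => H i)) h0.
move/eqP: hb; apply; apply/matrixP => i j; rewrite ord1 mxE.
by have /eqP := h0 i isT; rewrite mulf_eq0 orbb => /eqP.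
Qed.

Lemma farkas_step m n (a : 'M[R]_(m,1)) (A1 : 'M[R]_(m,n)) b :
  (forall A' b', @farkas_prop m n A' b') -> farkas_prop (row_mx a A1) b.
Proof.
move=> IH.
have nonneg_col : forall (x1 : 'cV[R]_1) (x2 : 'cV[R]_n),
   (forall j, 0 <= x1 j 0) -> (forall j, 0 <= x2 j 0) ->
   forall j, 0 <= (col_mx x1 x2) j 0.
  by move=> x1 x2 h1 h2 j; rewrite -(splitK j); case: (split j) => k /=; rewrite ?col_mxEu ?col_mxEd.
have nonneg_row : forall (y1 : 'rV[R]_1) (y2 : 'rV[R]_n),
   (forall j, 0 <= y1 0 j) -> (forall j, 0 <= y2 0 j) ->
   forall j, 0 <= (row_mx y1 y2) 0 j.
  by move=> x1 x2 h1 h2 j; rewrite -(splitK j); case: (split j) => k /=; rewrite ?row_mxEl ?row_mxEr.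
case: (IH A1 b) => [[x1 [hx1 e1]]|[y [hy hyb]]].
  left; exists (col_mx 0 x1); split; first by apply: nonneg_col => // j; rewrite mxE.
  by rewrite mul_row_col mulmx0 add0r.
set al := (y *m a) 0 0.
have [hal|hal] := leP 0 al.
  right; exists y; split => //; rewrite mul_mx_row; apply: nonneg_row => // j.
  by rewrite ord1.
set A2 := al *: A1 - a *m (y *m A1).
set b2 := al *: b - a *m (y *m b).
have alN : al != 0 by rewrite lt_eqF.
case: (IH A2 b2) => [[x2 [hx2 e2]]|[y2 [hy2 hyb2]]].
  set be := (y *m b) 0 0; set ga := (y *m A1 *m x2) 0 0.
  have hga : 0 <= ga by apply: prod_ge0.
  set t := (be - ga) / al.
  have ht : 0 <= t by rewrite /t ltW // ltr_ndivlMr // mul0r subr_lt0 (lt_le_trans hyb).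
  left; exists (col_mx t%:M x2); split.
    by apply: nonneg_col => // j; rewrite ord1 mxE eqxx mulr1n.
  rewrite mul_row_col mul_mx_scalar; apply: (scalerI alN).
  move: e2; rewrite /A2 /b2 mulmxBl -scalemxAl -mulmxA (mx11_mulr a (y *m b)) (mx11_mulr a (y *m A1 *m x2)).
  rewrite -/be -/ga => e2.
  have -> : al *: b = al *: (A1 *m x2) - ga *: a + be *: a.
    by rewrite e2 subrK.
  rewrite scalerDr scalerA /t mulrC divfK // scalerBl; 
  by rewrite addrC -!addrA; congr (_ + _); rewrite addrC.
set c := (y2 *m a) 0 0.
right; exists ((c / al) *: y - y2); split.
  rewrite mul_mx_row; apply: nonneg_row => j.
    rewrite mulmxBl -scalemxAl [y *m a]mx11_scalar [y2 *m a]mx11_scalar -/al -/c.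
    by rewrite scale_scalar_mx divfK // subrr mxE.
  have -> : ((c / al) *: y - y2) *m A1 = - al^-1 *: (y2 *m A2).
    rewrite /A2 mulmxBr -scalemxAr [y2 *m (a *m _)]mulmxA (mx11_mull (y2 *m a)) -/c.
    rewrite mulmxBl -scalemxAl scalerBr !scalerA !mulNr mulVf // scaleN1r scaleNr opprK.
    by rewrite addrC mulrC.
  by rewrite mxE mulNr oppr_ge0 nmulr_rle0 ?invr_lt0.
have -> : ((c / al) *: y - y2) *m b = - al^-1 *: (y2 *m b2).
  rewrite /b2 mulmxBr -scalemxAr [y2 *m (a *m _)]mulmxA (mx11_mull (y2 *m a)) -/c.
  rewrite mulmxBl -scalemxAl scalerBr !scalerA !mulNr mulVf // scaleN1r scaleNr opprK.
  by rewrite addrC mulrC.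
by rewrite mxE mulNr oppr_lt0 nmulr_rgt0 ?invr_lt0.
Qed.

Lemma farkas m n (A : 'M[R]_(m,n)) (b : 'cV[R]_m) : farkas_prop A b.
Proof.
elim: n A b => [|n IH] A b; first exact: farkas0.
have -> : A = row_mx (lsubmx (A : 'M_(m, 1 + n))) (rsubmx (A : 'M_(m, 1 + n))) by rewrite hsubmxK.
exact: farkas_step.
Qed.

End Farkas.

Section Fwd.
Variables (R : realType) (p q n : nat) (V : 'M[R]_(p,n)) (W : 'M[R]_(q,n)) (w : 'cV[R]_q).

Definition aff (t : R) (u : 'rV[R]_n) : 'rV[R]_q := t *: w^T - u *m W^T.

Lemma affE t u j : aff t u 0 j = t * w j 0 - (W *m u^T) j 0.
Proof.
rewrite /aff !mxE; congr (_ - _); apply: eq_bigr => k _; rewrite !mxE mulrC //.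
Qed.

Lemma halfE x : in_halfspaces W w x <-> (forall j, 0 <= aff 1 x 0 j).
Proof.
split=> h j; have := h j; rewrite affE mul1r; by rewrite subr_ge0.
Qed.

Lemma MformE (x : 'rV[R]_p) :
  x *m (row_mx (const_mx 1 : 'M[R]_(p, 1)) V *m (row_mx w (- W))^T)
  = aff ((x *m (const_mx 1 : 'cV[R]_p)) 0 0) (x *m V).
Proof.
rewrite tr_row_mx linearN /= mulmxA mul_mx_row mul_row_col mx11_mull.
by rewrite mulmxN.
Qed.

End Fwd.

Section Fwd2.
Variables (R : realType) (p q n : nat) (V : 'M[R]_(p,n)) (W : 'M[R]_(q,n)) (w : 'cV[R]_q).
Hypothesis hP : forall x, in_conv V x <-> in_halfspaces W w x.
Variable x0 : 'rV[R]_n.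
Hypothesis hx0 : in_conv V x0.

Local Notation aff := (aff W w).

Lemma Wlin (a b : 'rV[R]_n) (k : R) j :
  (W *m (a + k *: b)^T) j 0 = (W *m a^T) j 0 + k * (W *m b^T) j 0.
Proof.
rewrite linearD linearZ /= mulmxDr -scalemxAr.
by rewrite [in LHS]mxE [X in _ + X]mxE.
Qed.

Lemma Wscale (a : 'rV[R]_n) (k : R) j :
  (W *m (k *: a)^T) j 0 = k * (W *m a^T) j 0.
Proof. by rewrite -[k *: a]add0r Wlin linear0 mulmx0 mxE add0r. Qed.

Lemma conv_norm_bound (lam : 'rV[R]_p) (i : 'I_n) : (forall r, 0 <= lam 0 r) -> \sum_(r < p) lam 0 r = 1 ->
  `|(lam *m V) 0 i| <= \sum_r `|V r i|.
Proof.
move=> hl0 hl1; rewrite mxE; apply: le_trans (ler_norm_sum _ _ _) _.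
apply: ler_sum => r _; rewrite normrM ger0_norm //.
have lr1 : lam 0 r <= 1.
  by rewrite -hl1 (bigD1 r) //= lerDl sumr_ge0.
by rewrite -[X in _ <= X]mul1r ler_wpM2r.
Qed.

Lemma recession (d : 'rV[R]_n) : (forall j, (W *m d^T) j 0 <= 0) -> d = 0.
Proof.
move=> hd; apply/rowP => i; rewrite mxE; apply/eqP/negPn/negP => hdi.
set C := \sum_r `|V r i|.
have hdn : 0 < `|d 0 i| by rewrite normr_gt0.
set k := (C + `|x0 0 i| + 1) / `|d 0 i|.
have hC : 0 <= C by apply: sumr_ge0 => r _.
have hk : 0 <= k by rewrite /k divr_ge0 // addr_ge0 // addr_ge0.
have : in_conv V (x0 + k *: d).
  apply/hP => j; have h0 := (hP x0).1 hx0 j; rewrite Wlin; have := hd j; nra.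
case=> lam [hl0 [hl1 hx]].
have hb := conv_norm_bound i hl0 hl1; rewrite -hx -/C in hb.
have e : `|k * d 0 i| = C + `|x0 0 i| + 1.
  by rewrite normrM ger0_norm // /k divfK // gt_eqF.
have : `|k * d 0 i| <= `|(x0 + k *: d) 0 i| + `|x0 0 i|.
  have -> : k * d 0 i = (x0 + k *: d) 0 i - x0 0 i.
    by rewrite !mxE addrAC subrr add0r.
  by rewrite (le_trans (ler_normB _ _)) // lerD2l normrN.
rewrite e; lra.
Qed.

Lemma Gsign t u : t <= 0 -> (forall j, 0 <= aff t u 0 j) -> u = t *: x0 /\ aff t u = 0.
Proof.
move=> ht h; have h0 := (hP x0).1 hx0.
have hu : u - t *: x0 = 0.
  apply: recession => j; rewrite -scaleNr Wlin; have := h j; rewrite affE; have := h0 j; nra.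
have eu : u = t *: x0 by apply/eqP; rewrite -subr_eq0 hu.
split=> //; apply/rowP => j; rewrite [RHS]mxE affE eu Wscale.
have := h j; rewrite affE eu Wscale; have := h0 j; nra.
Qed.

Local Notation M := (row_mx (const_mx 1 : 'M[R]_(p,1)) V *m (row_mx w (- W))^T).

Lemma sum_one (lam : 'rV[R]_p) : (lam *m (const_mx 1 : 'cV[R]_p)) 0 0 = \sum_r lam 0 r.
Proof. by rewrite mxE; apply: eq_bigr => r _; rewrite mxE mulr1. Qed.

Lemma row_fwd (x : 'rV[R]_p) : (forall j, 0 <= (x *m M) 0 j) ->
  exists x' : 'rV[R]_p, (forall i, 0 <= x' 0 i) /\ x *m M = x' *m M.
Proof.
rewrite MformE; set t := (x *m _) 0 0; set u := x *m V => h.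
have [ht|ht] := ltP 0 t.
  have tN : t != 0 by rewrite gt_eqF.
  have hz : in_conv V (t^-1 *: u).
    apply/hP/halfE => j; have := h j; rewrite !affE Wscale.
    have -> : 1 * w j 0 - t^-1 * (W *m u^T) j 0 = t^-1 * (t * w j 0 - (W *m u^T) j 0).
      by field.
    by move=> hj; rewrite mulr_ge0 // invr_ge0 ltW.
  case: hz => lam [hl0 [hl1 hu]].
  exists (t *: lam); split; first by move=> i; rewrite mxE mulr_ge0 // ltW.
  rewrite MformE -!scalemxAl -hu scalerA mulfV // scale1r mxE sum_one hl1 mulr1 //.
have [_ e] := Gsign ht h.
by exists 0; split=> [i|]; rewrite ?mxE // mul0mx e.
Qed.


End Fwd2.

Lemma col_fwd_gen (R : realType) (p q : nat) (M : 'M[R]_(p,q))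
  (hrow : forall y : 'rV[R]_p, (forall j, 0 <= (y *m M) 0 j) ->
      exists x' : 'rV[R]_p, (forall i, 0 <= x' 0 i) /\ y *m M = x' *m M)
  (u : 'cV[R]_p) (z : 'cV[R]_q) : u = M *m z -> (forall i, 0 <= u i 0) ->
  exists z' : 'cV[R]_q, (forall j, 0 <= z' j 0) /\ u = M *m z'.
Proof.
move=> hu h; case: (farkas M u) => [[z' [hz e]]|[y [hy hyu]]]; first by exists z'.
have [x' [hx' e]] := hrow _ hy.
have := prod_ge0 hx' h.
by rewrite hu mulmxA -e -mulmxA -hu => /(lt_le_trans hyu); rewrite ltxx.
Qed.

Lemma one_fwd (R : realType) (p q n : nat) (V : 'M[R]_(p,n)) (W : 'M[R]_(q,n)) (w : 'cV[R]_q)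
  (hP : forall x, in_conv V x <-> in_halfspaces W w x) (x1 x2 : 'rV[R]_n) :
  in_conv V x1 -> in_conv V x2 -> x1 != x2 ->
  exists z : 'cV[R]_q, (row_mx (const_mx 1 : 'M[R]_(p,1)) V *m (row_mx w (- W))^T) *m z = const_mx 1.
Proof.
move=> h1 h2 ne.
set M := (row_mx _ _ *m _).
case: (farkas (row_mx M (- M)) (const_mx 1)) => [[x [hx e]]|[y [hy hy1]]].
  exists (usubmx x - dsubmx x); set a := usubmx x; set b := dsubmx x.
  by rewrite -e -(vsubmxK x) -/a -/b mul_row_col mulNmx mulmxBr.
have hyM : y *m M = 0.
  apply/rowP => j; apply/eqP; rewrite eq_le.
  have := hy (rshift q j); have := hy (lshift q j).
  rewrite mul_mx_row row_mxEl row_mxEr mulmxN [in X in _ -> X]mxE [(0 : 'rV_q) 0 j]mxE.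
  by move=> ha hb; rewrite ha andbT -oppr_ge0.
have := hyM; rewrite /M MformE => e.
move: e hy1; set t := (y *m _) 0 0; set u := y *m V => e hy1.
have h : forall j, 0 <= aff W w t u 0 j by move=> j; rewrite e mxE.
have [e1 _] := Gsign hP h1 (ltW hy1) h.
have [e2 _] := Gsign hP h2 (ltW hy1) h.
exfalso; move/negP: ne; apply; apply/eqP; apply: (scalerI (ltr0_neq0 hy1)).
by rewrite -e1 -e2.
Qed.

Lemma nonneg_rowcomb (R : realType) (p q : nat) (M : 'M[R]_(p,q)) (x : 'rV[R]_p) :
  (forall i j, 0 <= M i j) -> (forall i, 0 <= x 0 i) -> forall j, 0 <= (x *m M) 0 j.
Proof. by move=> hM hx j; rewrite mxE; apply: sumr_ge0 => i _; apply: mulr_ge0. Qed.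

Lemma nonneg_colcomb (R : realType) (p q : nat) (M : 'M[R]_(p,q)) (z : 'cV[R]_q) :
  (forall i j, 0 <= M i j) -> (forall j, 0 <= z j 0) -> forall i, 0 <= (M *m z) i 0.
Proof. by move=> hM hx j; rewrite mxE; apply: sumr_ge0 => i _; apply: mulr_ge0. Qed.

Definition RowC (R : realType) (p q : nat) (M : 'M[R]_(p,q)) :=
  forall y : 'rV[R]_q,
        (exists x : 'rV[R]_p, (forall i, 0 <= x 0 i) /\ y = x *m M) <->
        ((exists x : 'rV[R]_p, y = x *m M) /\ (forall j, 0 <= y 0 j)).
Definition ColC (R : realType) (p q : nat) (M : 'M[R]_(p,q)) :=
  forall u : 'cV[R]_p,
        (exists z : 'cV[R]_q, (forall j, 0 <= z j 0) /\ u = M *m z) <->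
        ((exists z : 'cV[R]_q, u = M *m z) /\ (forall i, 0 <= u i 0)).
Definition OneC (R : realType) (p q : nat) (M : 'M[R]_(p,q)) :=
  exists z : 'cV[R]_q, M *m z = const_mx 1.

Lemma fwd (R : realType) (p q : nat) (M : 'M[R]_(p,q)) :
  (forall i j, 0 <= M i j) -> is_slack_matrix M -> [/\ RowC M, ColC M & OneC M].
Proof.
move=> hM [n [V [W [w [hP [[x1 [x2 [h1 h2 ne]]] eM]]]]]].
split.
- move=> y; split.
    case=> x [hx ->]; split; first by exists x.
    exact: nonneg_rowcomb.
  case=> [[x ex] hy]; rewrite ex in hy *; rewrite eM in hy *.
  have [x' [hx' e]] := row_fwd hP h1 hy.
  by exists x'.
- move=> u; split.
    case=> z [hz ->]; split; first by exists z.
    exact: nonneg_colcomb.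
  case=> [[z ez] hu]; rewrite eM in ez.
  have [z' [hz' e]] := col_fwd_gen (row_fwd hP h1) ez hu.
  by exists z'; rewrite eM.
rewrite /OneC eM. have H := one_fwd hP h1 h2 ne. exact H.
Qed.

Lemma factor (R : realType) (p q : nat) (M : 'M[R]_(p,q)) : (2 <= \rank M)%N -> OneC M ->
  exists n (V : 'M[R]_(p,n)) (B : 'M[R]_(1 + n, q)) (Y : 'M[R]_(q, 1 + n)) (G : 'M[R]_(1 + n, p)),
   [/\ M = row_mx (const_mx 1) V *m B, row_mx (const_mx 1) V = M *m Y, B = G *m M,
       row_free B & row_free (row_mx (const_mx 1 : 'cV[R]_p) V)^T /\ (1 <= n)%N].
Proof.
move=> hr [z0 hz0].
set K := M^T.
set one := (const_mx 1 : 'rV[R]_p).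
have hp : (0 < p)%N by apply: (leq_trans _ (leq_trans hr (rank_leq_row M))).
have one_sub : (one <= K)%MS.
  by apply/submxP; exists z0^T; rewrite /K -trmx_mul hz0 trmx_const.
have one_ne0 : one != 0.
  by apply/eqP => /rowP/(_ (Ordinal hp)); rewrite !mxE => /eqP; rewrite oner_eq0.
set D := (K :\: one)%MS.
set n := \rank D.
set Vt := row_base D.
set Et := col_mx one Vt.
have EtK : (Et == K)%MS.
  apply/andP; split.
    by rewrite col_mx_sub one_sub /= /Vt (eq_row_base D) diffmxSl.
  rewrite -{1}(addsmx_diff_cap_eq K one) /Et -addsmxE addsmx_sub.
  have DV : (D <= Vt)%MS by rewrite /Vt (eq_row_base D).
  rewrite (submx_trans DV (addsmxSr _ _)) /=.
  exact: submx_trans (capmxSr _ _) (addsmxSl _ _).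
have rEt : \rank Et = (1 + n)%N.
  rewrite /Et -addsmxE mxrank_disjoint_sum ?rank_rV ?one_ne0 /Vt ?(eq_row_base D) //.
  apply/eqP; rewrite -submx0.
  have hD : (row_base D <= D)%MS by rewrite (eq_row_base D).
  apply: submx_trans (capmxS (submx_refl one) hD) _.
  by rewrite capmxC capmx_diff.
have rM : \rank M = (1 + n)%N by rewrite -mxrank_tr -/K -(eqmx_rank EtK) rEt.
have /submxP [X eX] : (K <= Et)%MS by case/andP: EtK.
have /submxP [Y eY] : (Et <= K)%MS by case/andP: EtK.
exists n, Vt^T, X^T, Y^T.
have eE : row_mx (const_mx 1) Vt^T = Et^T by rewrite tr_col_mx trmx_const.
have eM : M = Et^T *m X^T by rewrite -trmx_mul -eX trmxK.
have rB : row_free X^T.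
  rewrite /row_free eqn_leq rank_leq_row /=.
  by have := mxrankM_maxr Et^T X^T; rewrite -eM rM.
have : (X^T <= M)%MS.
  have sMB : (M <= X^T)%MS by rewrite eM submxMl.
  by rewrite -(mxrank_leqif_sup sMB).2 rM; move/eqnP: rB => ->.
case/submxP => G eG; exists G.
split=> //.
- by rewrite eE.
- by rewrite eE eY trmx_mul trmxK.
split; first by rewrite eE trmxK /row_free rEt.
  by rewrite -ltnS -[n.+1]/(1 + n)%N -rM.
Qed.

Lemma rowB (R : realType) (q n : nat) (W : 'M[R]_(q,n)) (w : 'cV[R]_q) (x : 'rV[R]_n) :
  row_mx (const_mx 1 : 'M[R]_1) x *m (row_mx w (- W))^T = aff W w 1 x.
Proof.
rewrite tr_row_mx mul_row_col mx11_mull mxE /aff -mulmxN; congr (_ + x *m _); apply/matrixP => i j; by rewrite !mxE.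
Qed.

Lemma halfB (R : realType) (q n : nat) (W : 'M[R]_(q,n)) (w : 'cV[R]_q) (x : 'rV[R]_n) :
  in_halfspaces W w x <-> forall j, 0 <= (row_mx (const_mx 1 : 'M[R]_1) x *m (row_mx w (- W))^T) 0 j.
Proof. rewrite rowB; exact: halfE. Qed.

Lemma conv_of (R : realType) (p n : nat) (V : 'M[R]_(p,n)) (x : 'rV[R]_n) (lam : 'rV[R]_p) :
  (forall i, 0 <= lam 0 i) -> lam *m row_mx (const_mx 1 : 'cV[R]_p) V = row_mx (const_mx 1 : 'M[R]_1) x ->
  in_conv V x.
Proof.
move=> hl; rewrite mul_mx_row => /eq_row_mx [e1 e2].
exists lam; split=> //; split=> //.
by rewrite -sum_one e1 mxE.
Qed.

Lemma conv_row (R : realType) (p n : nat) (V : 'M[R]_(p,n)) (i : 'I_p) : in_conv V (row i V).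
Proof.
exists (delta_mx 0 i); split; first by move=> r; rewrite mxE ler0n.
split; last by rewrite rowE.
rewrite (bigD1 i) //= mxE !eqxx /= big1 ?addr0 // => r ne.
by rewrite mxE eqxx /=; move: ne; case: (r =P i) => // ->; rewrite eqxx.
Qed.

Lemma bwd (R : realType) (p q : nat) (M : 'M[R]_(p,q)) :
  (forall i j, 0 <= M i j) -> (2 <= \rank M)%N -> OneC M -> (RowC M \/ ColC M) ->
  is_slack_matrix M.
Proof.
move=> hM hr hone hRC.
have hp : (0 < p)%N by apply: (leq_trans _ (leq_trans hr (rank_leq_row M))).
have [n [V [B [Y [G [eM eE eG rB [rE hn]]]]]]] := factor hr hone.
set E := row_mx (const_mx 1 : 'cV[R]_p) V in eM eE rE.
set w := (usubmx B)^T; set W := - (dsubmx B)^T.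
have eB : (row_mx w (- W))^T = B by rewrite tr_row_mx /w /W opprK !trmxK vsubmxK.
exists n, V, W, w; split; last split; last by rewrite eB.
- move=> x; split.
    case=> lam [hl0 [hl1 ->]]; apply/halfB; rewrite eB.
    have -> : row_mx (const_mx 1 : 'M[R]_1) (lam *m V) = lam *m E.
      rewrite mul_mx_row; congr row_mx; apply/matrixP => i j; rewrite !ord1 sum_one hl1 mxE //.
    rewrite -mulmxA -eM; exact: nonneg_rowcomb.
  move/halfB; rewrite eB => hx.
  case: hRC => [hRow|hCol].
    set y := row_mx (const_mx 1 : 'M[R]_1) x *m B.
    have [|lam [hl0 ey]] := (hRow y).2.
      by split=> //; exists (row_mx (const_mx 1 : 'M[R]_1) x *m G); rewrite /y eG mulmxA.
    apply: (conv_of hl0); apply: (row_free_inj rB); rewrite /= -mulmxA -eM -ey //.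
  case: (farkas E^T (row_mx (const_mx 1 : 'M[R]_1) x)^T) => [[lc [hlc e]]|[y [hy hyb]]].
    apply: (conv_of (lam := lc^T)); first by move=> i; rewrite mxE.
    by rewrite -[LHS]trmxK trmx_mul trmxK e trmxK.
  set u := E *m y^T.
  have hu0 : forall i, 0 <= u i 0.
    move=> i; suff -> : u i 0 = (y *m E^T) 0 i by apply: hy.
    by rewrite /u -[E *m _]trmxK trmx_mul trmxK [LHS]mxE.
  have [|z' [hz' ez]] := (hCol u).2.
    by split=> //; exists (Y *m y^T); rewrite /u eE mulmxA.
  have ey : y = (B *m z')^T.
    apply: (row_free_inj rE); rewrite /= -[y *m _]trmxK trmx_mul trmxK -/u ez eM -mulmxA.
    by rewrite trmx_mul.
  move: hyb; rewrite ey -trmx_mul mxE mulmxA => hyb.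
  by have := prod_ge0 hx hz'; move/(lt_le_trans hyb); rewrite ltxx.
- case: (boolP [exists i, exists k, row i V != row k V]) => [/existsP [i /existsP [k ne]] | hall].
    by exists (row i V), (row k V); split=> //; apply: conv_row.
  exfalso.
  have hr' : forall i k, row i V = row k V.
    move=> i k; apply/eqP; apply/negPn/negP => ne; move/negP: hall; apply.
    by apply/existsP; exists i; apply/existsP; exists k.
  set i0 : 'I_p := Ordinal hp.
  have eE1 : E = const_mx 1 *m row i0 E.
    apply/matrixP => i j; rewrite [RHS]mxE big_ord1 [const_mx 1 i 0]mxE mul1r [row i0 E 0 j]mxE.
    rewrite -(splitK j); case: (split j) => k /=; rewrite ?row_mxEl ?row_mxEr; first by rewrite !mxE.
    by have := congr1 (fun r : 'rV[R]_n => r 0 k) (hr' i i0); rewrite !mxE.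
  have : (\rank E <= 1)%N.
    by rewrite eE1 (leq_trans (mxrankM_maxl _ _) (rank_leq_col _)).
  move: rE; rewrite /row_free mxrank_tr => /eqP ->.
  by rewrite ltnS leqn0 => /eqP n0; rewrite n0 in hn.
Qed.

Unset Implicit Arguments.

Theorem corollary2p7 (R : realType) (p q : nat) (M : 'M[R]_(p, q))
  (hM : forall i j, 0 <= M i j) (hrank : (2 <= \rank M)%N) :
  (is_slack_matrix M <->
     (forall y : 'rV[R]_q,
        (exists x : 'rV[R]_p, (forall i, 0 <= x 0 i) /\ y = x *m M) <->
        ((exists x : 'rV[R]_p, y = x *m M) /\ (forall j, 0 <= y 0 j))) /\
     (exists z : 'cV[R]_q, M *m z = const_mx 1)) /\
  (is_slack_matrix M <->
     (forall u : 'cV[R]_p,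
        (exists z : 'cV[R]_q, (forall j, 0 <= z j 0) /\ u = M *m z) <->
        ((exists z : 'cV[R]_q, u = M *m z) /\ (forall i, 0 <= u i 0))) /\
     (exists z : 'cV[R]_q, M *m z = const_mx 1)).
Proof.
have F := fwd hM; have Bk := bwd hM hrank.
split; split.
- by move=> hs; have [r c o] := F hs; split.
- by case=> r o; apply: Bk => //; left.
- by move=> hs; have [r c o] := F hs; split.
- by case=> c o; apply: Bk => //; right.
Qed.
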